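(* If two trees $T$ and $T'$ have the same subdivision of $[0,1]$ into leaf intervals, then $T'$ can be obtained from $T$ by a finite sequence of basic moves.
   Context: Let $\tau=(\sqrt5-1)/2$, so $\tau^2+\tau=1$. A tree is a finite rooted binary tree whose carets (non-leaf vertex with its two children) are each labelled $x$-type or $y$-type. Vertices correspond to subintervals of $[0,1]$: the root to $[0,1]$; if a vertex corresponds to $[p,p+\tau^k]$, an $x$-type caret there gives children $[p,p+\tau^{k+2}]$ (left) and $[p+\tau^{k+2},p+\tau^k]$ (right), and a $y$-type caret gives $[p,p+\tau^{k+1}]$ (left) and $[p+\tau^{k+1},p+\tau^k]$ (right). The subdivision of a tree is the decomposition of $[0,1]$ into the intervals of its leaves. A basic move replaces, at some vertex of a tree, an $x$-type caret whose right child carries an $x$-type caret by a $y$-type caret whose left child carries a $y$-type caret (keeping the three subtrees hanging below, in the same left-to-right order), or performs the reverse replacement. *)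

(* Defs.v *)
From Stdlib Require Import Reals List Relations.
Import ListNotations.
Open Scope R_scope.

(* tau = (sqrt 5 - 1)/2, so tau^2 + tau = 1 *)
Definition tau : R := (sqrt 5 - 1) / 2.

Inductive caret := XC | YC.

Inductive tree := Leaf | Node (c : caret) (l r : tree).

(* leaf intervals, left to right, as (left endpoint, right endpoint),
   for a tree hanging at a vertex with interval [p, p + tau^k] *)
Fixpoint leaf_intervals (t : tree) (p : R) (k : nat) : list (R * R) :=
  match t with
  | Leaf => [(p, p + tau ^ k)]
  | Node XC l r =>
      leaf_intervals l p (k + 2) ++ leaf_intervals r (p + tau ^ (k + 2)) (k + 1)
  | Node YC l r =>
      leaf_intervals l p (k + 1) ++ leaf_intervals r (p + tau ^ (k + 1)) (k + 2)
  end.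

Definition tree_subdivision (t : tree) : list (R * R) := leaf_intervals t 0 0.

Inductive basic_move : tree -> tree -> Prop :=
| bm_xy (A B C : tree) :
    basic_move (Node XC A (Node XC B C)) (Node YC (Node YC A B) C)
| bm_yx (A B C : tree) :
    basic_move (Node YC (Node YC A B) C) (Node XC A (Node XC B C))
| bm_left (c : caret) (l l' r : tree) :
    basic_move l l' -> basic_move (Node c l r) (Node c l' r)
| bm_right (c : caret) (l r r' : tree) :
    basic_move r r' -> basic_move (Node c l r) (Node c l r').

(* Main.v *)
Require Import Defs.
From Stdlib Require Import Reals List Relations Lra Lia.
Import ListNotations.
Open Scope R_scope.

Notation rt := (clos_refl_trans tree basic_move).

Lemma sqrt5_sq : sqrt 5 * sqrt 5 = 5.
Proof. apply sqrt_sqrt; lra. Qed.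

Lemma tau_pos : 0 < tau.
Proof. unfold tau. pose proof sqrt5_sq. pose proof (sqrt_pos 5). nra. Qed.

Lemma tau_lt1 : tau < 1.
Proof. unfold tau. pose proof sqrt5_sq. pose proof (sqrt_pos 5). nra. Qed.

Lemma tau_eq : tau * tau + tau = 1.
Proof. unfold tau. pose proof sqrt5_sq. nra. Qed.

Lemma taupow_pos k : 0 < tau ^ k.
Proof. apply pow_lt, tau_pos. Qed.

Lemma e1 t : t*tau*tau + t*tau = t.
Proof. replace (t*tau*tau + t*tau) with (t*(tau*tau+tau)) by ring. rewrite tau_eq; ring. Qed.

Lemma pos4 t : 0 < t -> 0 < t*tau /\ 0 < t*tau*tau /\ 0 < t*tau*tau*tau /\
  t*tau < t /\ t*tau*tau < t*tau.
Proof. intros. pose proof tau_pos; pose proof tau_lt1.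
  assert (0 < t*tau) by (apply Rmult_lt_0_compat; auto).
  assert (0 < t*tau*tau) by (apply Rmult_lt_0_compat; auto).
  assert (0 < t*tau*tau*tau) by (apply Rmult_lt_0_compat; auto).
  repeat split; auto.
  - assert (t*tau < t*1) by (apply Rmult_lt_compat_l; auto). lra.
  - assert (t*tau*tau < t*tau*1) by (apply Rmult_lt_compat_l; auto). lra.
Qed.

Ltac tauex := repeat rewrite pow_add; simpl;
  pose proof tau_pos; pose proof tau_lt1; pose proof tau_eq;
  match goal with |- context [tau ^ ?k] =>
    pose proof (taupow_pos k); pose proof (e1 (tau^k)); pose proof (e1 (tau^k*tau));
    pose proof (pos4 (tau^k) (taupow_pos k)) end.

Lemma bounds t : forall p k a b, In (a,b) (leaf_intervals t p k) ->
  p <= a /\ a < b /\ b <= p + tau ^ k.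
Proof.
  induction t as [|c l IHl r IHr]; intros p k a b H; simpl in H.
  - destruct H as [H|[]]. inversion H; subst. pose proof (taupow_pos k). lra.
  - pose proof (taupow_pos k) as Hk.
    destruct c; apply in_app_or in H; destruct H as [H|H].
    + apply IHl in H. revert H; tauex. intros; nra.
    + apply IHr in H. revert H; tauex. intros; nra.
    + apply IHl in H. revert H; tauex. intros; nra.
    + apply IHr in H. revert H; tauex. intros; nra.
Qed.

Lemma first_int t : forall p k, exists y rest, leaf_intervals t p k = (p,y)::rest.
Proof.
  induction t as [|c l IHl r IHr]; intros p k; simpl.
  - eauto.
  - destruct c.
    + destruct (IHl p (k+2)%nat) as [y [rest E]]; rewrite E; simpl; eauto.
    + destruct (IHl p (k+1)%nat) as [y [rest E]]; rewrite E; simpl; eauto.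
Qed.

Lemma len_pos t : forall p k, (1 <= length (leaf_intervals t p k))%nat.
Proof. intros p k. destruct (first_int t p k) as [y [rest E]]. rewrite E. simpl. lia. Qed.

Lemma move_pres t t' : basic_move t t' -> forall p k,
  leaf_intervals t p k = leaf_intervals t' p k.
Proof.
  induction 1; intros p k; simpl.
  - rewrite <- app_assoc.
    replace (k+1+2)%nat with (k+3)%nat by lia.
    replace (k+1+1)%nat with (k+2)%nat by lia.
    replace (p + tau ^ (k + 2) + tau ^ (k + 3)) with (p + tau^(k+1)).
    reflexivity. tauex. nra.
  - rewrite <- app_assoc.
    replace (k+1+2)%nat with (k+3)%nat by lia.
    replace (k+1+1)%nat with (k+2)%nat by lia.
    replace (p + tau ^ (k + 2) + tau ^ (k + 3)) with (p + tau^(k+1)).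
    reflexivity. tauex. nra.
  - destruct c; rewrite IHbasic_move; reflexivity.
  - destruct c; rewrite IHbasic_move; reflexivity.
Qed.

Lemma rt_pres t t' : rt t t' -> forall p k,
  leaf_intervals t p k = leaf_intervals t' p k.
Proof.
  induction 1; intros; auto using move_pres. rewrite IHclos_refl_trans1; auto.
Qed.

Lemma move_sym t t' : basic_move t t' -> basic_move t' t.
Proof. induction 1; constructor; auto. Qed.

Lemma rt_sym t t' : rt t t' -> rt t' t.
Proof.
  induction 1. apply rt_step, move_sym; auto. apply rt_refl. eapply rt_trans; eauto.
Qed.

Lemma rt_left c l l' r : rt l l' -> rt (Node c l r) (Node c l' r).
Proof.
  induction 1. apply rt_step; constructor; auto. apply rt_refl. eapply rt_trans; eauto.
Qed.

Lemma rt_right c l r r' : rt r r' -> rt (Node c l r) (Node c l r').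
Proof.
  induction 1. apply rt_step; constructor; auto. apply rt_refl. eapply rt_trans; eauto.
Qed.

Definition splitpt (c : caret) p k :=
  match c with XC => p + tau ^ (k+2) | YC => p + tau ^ (k+1) end.

Lemma rotate t : forall c p k y, In (splitpt c p k, y) (leaf_intervals t p k) ->
  exists l r, rt t (Node c l r).
Proof.
  induction t as [|c' A IHA B IHB]; intros c p k y H.
  - simpl in H. destruct H as [H|[]]. inversion H.
    destruct c; simpl in H1; pose proof (taupow_pos (k+2)); pose proof (taupow_pos (k+1)); lra.
  - destruct c, c'.
    + eauto using rt_refl.
    +
      simpl in H. apply in_app_or in H. destruct H as [H|H].
      * assert (Hs : p + tau ^ (k+2) = splitpt YC p (k+1)).
        { simpl. replace (k+1+1)%nat with (k+2)%nat by lia. reflexivity. }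
        rewrite Hs in H. destruct (IHA _ _ _ _ H) as [A1 [A2 HA]].
        exists A1, (Node XC A2 B). eapply rt_trans. apply rt_left. exact HA.
        apply rt_step. constructor.
      * apply bounds in H. exfalso. revert H. tauex. pose proof (taupow_pos k). intros. nra.
    +
      simpl in H. apply in_app_or in H. destruct H as [H|H].
      * apply bounds in H. exfalso. revert H. tauex. pose proof (taupow_pos k). intros. nra.
      * assert (Hs : p + tau ^ (k+1) = splitpt XC (p + tau^(k+2)) (k+1)).
        { simpl. tauex. nra. }
        rewrite Hs in H. destruct (IHB _ _ _ _ H) as [B1 [B2 HB]].
        exists (Node YC A B1), B2. eapply rt_trans. apply rt_right. exact HB.
        apply rt_step. constructor.
    + eauto using rt_refl.
Qed.

Lemma split_app (L1 L2 L1' L2' : list (R*R)) s :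
  (forall x, In x L1 -> snd x <= s) -> (forall x, In x L1' -> snd x <= s) ->
  (forall x, In x L2 -> s < snd x) -> (forall x, In x L2' -> s < snd x) ->
  L1 ++ L2 = L1' ++ L2' -> L1 = L1' /\ L2 = L2'.
Proof.
  revert L1'. induction L1 as [|a L1 IH]; intros L1' H1 H1' H2 H2' E;
  destruct L1' as [|b L1']; simpl in E.
  - auto.
  - exfalso. assert (In b L2) by (rewrite E; left; auto).
    specialize (H2 b H). specialize (H1' b (or_introl eq_refl)). lra.
  - exfalso. assert (In a L2') by (rewrite <- E; left; auto).
    specialize (H2' a H). specialize (H1 a (or_introl eq_refl)). lra.
  - inversion E; subst. destruct (IH L1') as [-> ->]; auto.
    intros; apply H1; right; auto. intros; apply H1'; right; auto.
Qed.

Lemma main_gen T : forall T' p k, leaf_intervals T p k = leaf_intervals T' p k -> rt T T'.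
Proof.
  induction T as [|c l IHl r IHr]; intros T' p k E.
  - destruct T' as [|c l r]. apply rt_refl.
    exfalso. assert (Hl := f_equal (@length _) E). simpl in Hl.
    destruct c; rewrite length_app in Hl;
    pose proof (len_pos l p (k+2)); pose proof (len_pos r (p+tau^(k+2)) (k+1));
    pose proof (len_pos l p (k+1)); pose proof (len_pos r (p+tau^(k+1)) (k+2)); lia.
  - assert (Hin : exists y, In (splitpt c p k, y) (leaf_intervals T' p k)).
    { rewrite <- E. simpl. destruct c; simpl.
      - destruct (first_int r (p + tau^(k+2)) (k+1)) as [y [rest Er]].
        exists y. apply in_or_app. right. rewrite Er. left; auto.
      - destruct (first_int r (p + tau^(k+1)) (k+2)) as [y [rest Er]].
        exists y. apply in_or_app. right. rewrite Er. left; auto. }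
    destruct Hin as [y Hin]. destruct (rotate _ _ _ _ _ Hin) as [l' [r' HT]].
    apply rt_sym in HT. eapply rt_trans; [| exact HT].
    pose proof (rt_pres _ _ HT p k) as E2. rewrite <- E2 in E. clear E2.
    destruct c; simpl in E.
    + apply split_app with (s := p + tau^(k+2)) in E.
      destruct E as [E1 E2].
      eapply rt_trans. apply rt_left, (IHl _ _ _ E1). apply rt_right, (IHr _ _ _ E2).
      all: intros [a b] Hab; apply bounds in Hab; simpl; revert Hab; tauex; intros; nra.
    + apply split_app with (s := p + tau^(k+1)) in E.
      destruct E as [E1 E2].
      eapply rt_trans. apply rt_left, (IHl _ _ _ E1). apply rt_right, (IHr _ _ _ E2).
      all: intros [a b] Hab; apply bounds in Hab; simpl; revert Hab; tauex; intros; nra.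
Qed.

Theorem mainTheorem15 (T T' : tree) :
  tree_subdivision T = tree_subdivision T' ->
  clos_refl_trans tree basic_move T T'.
Proof.
  intros E. exact (main_gen T T' 0 0 E).
Qed.
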